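(* Let $E$ be a real or complex Banach space, $T$ a strongly continuous semigroup on $E$, $\mathcal U$ a countably incomplete ultrafilter on a set $I$, and ${}^*$ the corresponding bounded ultrapower. Let $\Phi:\ell^\infty_I(E)/c_{\mathcal U}\to\widehat E$, $\Phi(\langle f_i\rangle+c_{\mathcal U})=\widehat f$ ($f$ the $\mathcal U$-class of $\langle f_i\rangle$). Then $\widehat E_{\max}=\Phi\big(\{x\in\ell^\infty_I(E)/c_{\mathcal U}:\lim_{t\to0}\|\tilde T(t)x-x\|=0\}\big)$, i.e. $\widehat E_{\max}$ corresponds to the maximal continuous subspace of $\ell^\infty_I(E)/c_{\mathcal U}$ with respect to $\tilde T$.
   Context: A semigroup is a map $T:[0,\infty)\to\mathcal L(E)$ with $T(0)=\mathrm{Id}$, $T(s+t)=T(s)T(t)$; strongly continuous means $\lim_{t\to0}\|T(t)f-f\|=0$ for all $f$. $\ell^\infty_I(E)$: bounded families in $E$ with sup-norm; $c_{\mathcal U}$: families with: for every $\varepsilon>0$ some $J\in\mathcal U$ has $\|f_i\|<\varepsilon$ for $i\in J$; quotient norm on $\ell^\infty_I(E)/c_{\mathcal U}$; $\tilde T(t)\langle f_i\rangle=\langle T(t)f_i\rangle$, induced also on the quotient. In the bounded ultrapower, ${}^*E$ consists of $\mathcal U$-classes of $I$-sequences in $E$. A nonstandard element is finite if its norm is bounded by a standard natural number, infinitesimal if its norm is below every standard $1/n$. $\widehat E=\mathrm{fin}({}^*E)/E_0$ (finite elements modulo infinitesimal ones), class map $f\mapsto\widehat f$, norm $\mathrm{st}(\|f\|)$.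 $E_{\max}$ is the set of finite $f\in{}^*E$ such that for every standard $\varepsilon>0$ there is standard $\delta>0$ with $\|{}^*T(t)f-f\|<\varepsilon$ for all positive standard $t<\delta$; $\widehat E_{\max}=E_{\max}/E_0$. *)

(* Defs.v *)
From HB Require Import structures.
From mathcomp Require Import all_boot all_order all_algebra.
From mathcomp Require Import all_classical all_reals all_analysis.
Set Implicit Arguments. Unset Strict Implicit. Unset Printing Implicit Defensive.
Import Order.TTheory GRing.Theory Num.Theory.
Import numFieldNormedType.Exports.
Local Open Scope classical_set_scope.
Local Open Scope ring_scope.

Section Defs.
Variables (R : realType) (E : normedModType R) (I : Type).

(* strongly continuous semigroup T : [0,oo) -> L(E); values at t < 0 are irrelevant *)
Definition strongly_continuous_semigroup (T : R -> {linear E -> E}) : Prop :=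
  [/\ (forall t, 0 <= t -> continuous (T t)),
      (forall x, T 0 x = x),
      (forall s t x, 0 <= s -> 0 <= t -> T (s + t) x = T s (T t x)) &
      (forall f, T t f @[t --> 0^'+] --> f)].

Definition is_ultrafilter (U : set (set I)) : Prop :=
  [/\ U setT, ~ U set0,
      (forall A B, U A -> A `<=` B -> U B),
      (forall A B, U A -> U B -> U (A `&` B)) &
      (forall A, U A \/ U (~` A))].

Definition countably_incomplete (U : set (set I)) : Prop :=
  exists J : nat -> set I, (forall n, U (J n)) /\ ~ U (\bigcap_n J n).

Variable U : set (set I).

Definition bounded_family (f : I -> E) : Prop :=
  exists M : R, forall i, `|f i| <= M.

Definition cU (f : I -> E) : Prop :=
  bounded_family f /\
  forall eps : R, 0 < eps -> exists J, U J /\ forall i, J i -> `|f i| < eps.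

Definition supnorm (f : I -> E) : R := sup (range (fun i => `|f i|)).

Definition qnorm (f : I -> E) : R :=
  inf [set supnorm (f - c) | c in cU].

(* the class f + c_U lies in the maximal continuous subspace w.r.t. tilde T:
   lim_{t -> 0} || tilde T(t) x - x || = 0 *)
Definition tilde_continuous (T : R -> {linear E -> E}) (f : I -> E) : Prop :=
  qnorm (fun i => T t (f i) - f i) @[t --> 0^'+] --> 0.

(* nonstandard side: an element of *E is the U-class of an I-sequence f;
   its norm is the class of (|f i|)_i in *R, compared with standard reals by Los *)
Definition ns_finite (f : I -> E) : Prop :=
  exists n : nat, U [set i | `|f i| <= n%:R].

Definition ns_infinitesimal (f : I -> E) : Prop :=
  forall n : nat, U [set i | `|f i| < (n.+1%:R)^-1].

Definition E_max (T : R -> {linear E -> E}) (f : I -> E) : Prop :=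
  ns_finite f /\
  forall eps : R, 0 < eps -> exists2 delta : R, 0 < delta &
    forall t : R, 0 < t -> t < delta -> U [set i | `|T t (f i) - f i| < eps].

(* hat E_max = E_max / E_0, as the set of (representatives of) finite elements
   whose class in hat E = fin of *E modulo E_0 lies in E_max / E_0 *)
Definition Ehat_max (T : R -> {linear E -> E}) : set (I -> E) :=
  [set f | ns_finite f /\ exists2 g, E_max T g & ns_infinitesimal (g - f)].

(* Phi({x in ell^oo/c_U : lim ||tilde T(t)x - x|| = 0}) as a subset of hat E,
   given by (representatives of) finite elements of *E :
   Phi(<g_i> + c_U) = hat(U-class of g) *)
Definition Phi_image (T : R -> {linear E -> E}) : set (I -> E) :=
  [set f | ns_finite f /\
    exists2 g, (bounded_family g /\ tilde_continuous T g) & ns_infinitesimal (g - f)].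

End Defs.

(* Main.v *)
Require Import Defs.
From HB Require Import structures.
From mathcomp Require Import all_boot all_order all_algebra.
From mathcomp Require Import all_classical all_reals all_analysis.
Import Order.TTheory GRing.Theory Num.Theory.
Import numFieldNormedType.Exports.
Local Open Scope classical_set_scope.
Local Open Scope ring_scope.

Set Implicit Arguments. Unset Strict Implicit.
Section Helpers.
Variables (R : realType) (E : normedModType R) (I : Type) (U : set (set I)).
Hypothesis UF : is_ultrafilter U.

Lemma U_sub A B : U A -> A `<=` B -> U B.
Proof. by case: UF => _ _ H _ _; apply: H. Qed.

Lemma U_inter A B : U A -> U B -> U (A `&` B).
Proof. by case: UF => _ _ _ H _; apply: H. Qed.

Lemma U_T : U setT.
Proof. by case: UF. Qed.

Lemma I_inhabited : exists i : I, True.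
Proof.
apply: contrapT => H; case: UF => HT H0 _ _ _; apply: H0.
suff -> : (@set0 I) = setT by [].
by apply/seteqP; split => // i _; exfalso; apply: H; exists i.
Qed.

Lemma supnorm_ge (h : I -> E) i : bounded_family h -> `|h i| <= supnorm h.
Proof.
move=> [M HM]; apply: ub_le_sup; last by exists i.
by exists M => _ [j _ <-].
Qed.

Lemma supnorm_le (h : I -> E) M : (forall i, `|h i| <= M) -> supnorm h <= M.
Proof.
move=> HM; have [i _] := I_inhabited.
apply: ge_sup; first by exists `|h i|, i.
by move=> _ [j _ <-].
Qed.

Lemma bounded_sub (f g : I -> E) : bounded_family f -> bounded_family g ->
  bounded_family (f - g).
Proof.
move=> [M HM] [N HN]; exists (M + N) => i /=.
by rewrite (le_trans (ler_normB _ _)) // lerD.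
Qed.

Lemma cU0 : cU U (fun _ : I => (0 : E)).
Proof.
split; first by exists 0 => i; rewrite normr0.
by move=> e e0; exists setT; split; [exact: U_T | move=> i _; rewrite normr0].
Qed.

Lemma qset_ne (h : I -> E) : [set supnorm (h - c) | c in cU U] !=set0.
Proof. by exists (supnorm (h - (fun _ => 0))), (fun _ => 0) => //; exact: cU0. Qed.

Lemma qset_lb (h : I -> E) : bounded_family h ->
  lbound [set supnorm (h - c) | c in cU U] 0.
Proof.
move=> hb _ [c [cb _] <-]; have [i _] := I_inhabited.
have := supnorm_ge i (bounded_sub hb cb); apply: le_trans; exact: normr_ge0.
Qed.

Lemma qnorm_ge0 (h : I -> E) : bounded_family h -> 0 <= qnorm U h.
Proof. by move=> hb; apply: lb_le_inf; [exact: qset_ne | exact: qset_lb]. Qed.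

Lemma qnorm_small (h : I -> E) e : bounded_family h -> qnorm U h < e ->
  U [set i | `|h i| < e + e].
Proof.
move=> hb /(inf_lt (qset_ne h)) [_ [c [cb cs] <-] hc].
have e0 : 0 < e.
  by apply: le_lt_trans hc; apply: (qset_lb hb); exists c.
have [J [UJ HJ]] := cs e e0.
apply: (U_sub (A:=J)) => // i Ji /=.
have : `|h i - c i| <= supnorm (h - c) by exact: (supnorm_ge i (bounded_sub hb cb)).
move=> H1.
have -> : h i = (h i - c i) + c i by rewrite subrK.
rewrite (le_lt_trans (ler_normD _ _)) // ltrD //; first exact: le_lt_trans H1 hc.
exact: HJ.
Qed.

Lemma qnorm_le (h : I -> E) e : bounded_family h -> 0 < e ->
  U [set i | `|h i| < e] -> qnorm U h <= e.
Proof.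
move=> hb e0 UA.
pose c := fun i => if `|h i| < e then 0 else h i.
have cc : cU U c.
  split.
    case: hb => M HM; exists M => i; rewrite /c; case: ifP => _ //.
    by rewrite normr0 (le_trans (normr_ge0 _) (HM i)).
  move=> e' e'0; exists [set i | `|h i| < e]; split => // i /= Hi; rewrite /c Hi.
  by rewrite normr0.
apply: (@le_trans _ _ (supnorm (h - c))).
  apply: ge_inf; last by exists c.
  by exists 0; exact: qset_lb.
apply: supnorm_le => i; rewrite /c !fctE; case: ifP => H.
  by rewrite subr0 ltW.
by rewrite subrr normr0 ltW.
Qed.

End Helpers.

Lemma near_right_delta (R : realType) (P : R -> Prop) :
  (\forall t \near 0^'+, P t) ->
  exists2 d : R, 0 < d & forall t, 0 < t -> t < d -> P t.
Proof.
move=> H. rewrite /within in H. move: H => /nbhs_ballP [d d0 H].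
exists d => // t t0 td. apply: H => //. rewrite /ball /= sub0r normrN gtr0_norm //.
Qed.

Theorem mainTheorem9 (R : realType) (E : completeNormedModType R)
  (T : R -> {linear E -> E}) (I : Type) (U : set (set I)) :
  strongly_continuous_semigroup T ->
  is_ultrafilter U -> countably_incomplete U ->
  Ehat_max U T = Phi_image U T.
Proof.
move=> [Tc _ _ _] UF _.
have Tb : forall t, 0 <= t -> forall g : I -> E, bounded_family g ->
    bounded_family (fun i => T t (g i) - g i).
  move=> t t0 g [M HM].
  have := (proj2 (bounded_funP (T t))) ((linear_bounded_continuous (T t)).2 (Tc t t0)) M.
  move=> [N HN]; exists (N + M) => i.
  by rewrite (le_trans (ler_normB _ _)) // lerD // HN.
apply/seteqP; split => f [ff [g Hg Hgf]]; split => //.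
- case: Hg => [[n Un] Hg].
  pose g' := fun i => if `|g i| <= n%:R then g i else 0.
  have g'b : bounded_family g'.
    exists n%:R => i; rewrite /g'; case: ifP => // _.
    by rewrite normr0.
  exists g'; last first.
    move=> m; have H2 := U_inter UF Un (Hgf m); apply: (U_sub UF H2).
    by move=> i [/= Hi]; rewrite !fctE /g' Hi.
  split => //; apply/cvgrPdist_lt => e e0.
  have [d d0 Hd] := Hg (e / 2) (divr_gt0 e0 (ltr0Sn _ 1)).
  near=> t.
  have t0 : 0 < t by near: t; exact: nbhs_right_gt.
  have td : t < d by near: t; exact: nbhs_right_lt.
  rewrite sub0r normrN ger0_norm; last exact: qnorm_ge0 (Tb _ (ltW t0) _ g'b).
  apply: (le_lt_trans (qnorm_le UF (Tb _ (ltW t0) _ g'b) (divr_gt0 e0 (ltr0Sn _ 1)) _)).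
    apply: (U_sub UF (U_inter UF Un (Hd t t0 td))).
    by move=> i [/= Hi]; rewrite /g' Hi.
  by rewrite ltr_pdivrMr // ltr_pMr // ltr1n.
- case: Hg => gb gc.
  exists g => //; split.
    case: gb => M HM.
    exists (Num.Def.archi_bound `|M|).
    apply: (U_sub UF (U_T UF)) => i _ /=.
    apply: le_trans (HM i) _; apply: le_trans (ler_norm M) _.
    exact: ltW (archi_boundP (normr_ge0 M)).
  move=> e e0.
  have H : \forall t \near 0^'+, `|0 - qnorm U (fun i => T t (g i) - g i)| < e / 2.
    by move/cvgrPdist_lt : gc; apply; exact: divr_gt0.
  have [d d0 Hd] := near_right_delta H; exists d => // t t0 td.
  have := Hd t t0 td; rewrite sub0r normrN ger0_norm; last exact: qnorm_ge0 (Tb _ (ltW t0) _ gb).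
  move=> /(qnorm_small UF (Tb _ (ltW t0) _ gb)).
  by rewrite -splitr.
Unshelve. all: by end_near.
Qed.
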